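(* Let $\mathcal M=(S,L,\tau,\ell)$ be an LMC (possibly with infinitely many states) and $s,t\in S$. Then $d(s,t)<1$ if and only if there is a policy $T$ with $\mathcal R^T_{\mathcal M}((s,t),S^2_1)<1$. In particular, if there is a policy $T$ with $\mathcal R^T_{\mathcal M}((s,t),S^2_0)>0$, then $d(s,t)<1$.
   Context: An LMC $\mathcal M=(S,L,\tau,\ell)$ has a nonempty countable state set $S$, finite label set $L$, finitely-branching transition function $\tau:S\to\mathrm{Distr}(S)$ and labelling $\ell$. The probabilistic bisimilarity distance $d$ is the least fixed point of $\Delta(e)(s,t)=1$ if $\ell(s)\ne\ell(t)$ and $\Delta(e)(s,t)=\min_{\omega\in\Omega(\tau(s),\tau(t))}\sum_{u,v}\omega(u,v)e(u,v)$ otherwise, where $\Omega(\mu,\nu)$ is the set of couplings (distributions on $S\times S$ with marginals $\mu,\nu$). Probabilistic bisimilarity $\sim$ is the largest equivalence $R$ on $S$ such that $(s,t)\in R$ implies $\ell(s)=\ell(t)$ and $\tau(s)(E)=\tau(t)(E)$ for every $R$-class $E$. Partition $S^2$ into $S^2_0=\{(s,t):s\sim t\}$, $S^2_1=\{(s,t):\ell(s)\ne\ell(t)\}$, $S^2_?=S^2\setminus(S^2_0\cup S^2_1)$. A policy is a map $T:S^2_?\to\mathrm{Distr}(S^2)$ with $T(s,t)\in\Omega(\tau(s),\tau(t))$. The Markov chain $\mathcal C^T_{\mathcal M}$ on $S^2$ has every pair in $S^2_0\cup S^2_1$ absorbing and from $(u,v)\in S^2_?$ moves to $(x,y)$ with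 probability $T(u,v)(x,y)$. $\mathcal R^T_{\mathcal M}((s,t),Z)$ is the probability that $\mathcal C^T_{\mathcal M}$ started in $(s,t)$ reaches $Z\subseteq S^2$. *)

(* Defs.v *)
From HB Require Import structures.
From mathcomp Require Import all_boot all_order all_algebra.
From mathcomp Require Import boolp classical_sets functions cardinality fsbigop reals.
Set Implicit Arguments. Unset Strict Implicit. Unset Printing Implicit Defensive.
Import Order.TTheory GRing.Theory Num.Theory.
Local Open Scope classical_set_scope.
Local Open Scope ring_scope.

Section LMC.
Variables (R : realType) (S : countType) (L : finType).

Definition is_distr (T : choiceType) (mu : T -> R) : Prop :=
  (forall x, 0 <= mu x) /\ finite_set [set x | mu x != 0] /\
  \sum_(x \in [set: T]) mu x = 1.

Definition coupling (mu nu : S -> R) (w : S * S -> R) : Prop :=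
  is_distr w /\
  (forall u, \sum_(v \in [set: S]) w (u, v) = mu u) /\
  (forall v, \sum_(u \in [set: S]) w (u, v) = nu v).

Variables (tau : S -> S -> R) (ell : S -> L).

(* The operator Delta on e : S -> S -> R. The min over couplings is written
   as an infimum (the minimum is attained, Omega being a compact polytope). *)
Definition Delta (e : S -> S -> R) (s t : S) : R :=
  if ell s != ell t then 1
  else inf [set \sum_(p \in [set: S * S]) w p * e p.1 p.2
           | w in [set w | coupling (tau s) (tau t) w]].

Definition bounded01 (e : S -> S -> R) : Prop := forall s t, 0 <= e s t <= 1.
Definition is_bisim_distance (d : S -> S -> R) : Prop :=
  [/\ bounded01 d, (forall s t, Delta d s t = d s t) &
      forall e, bounded01 e -> (forall s t, Delta e s t = e s t) ->
      forall s t, d s t <= e s t].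

Definition prob_bisim (Rb : S -> S -> Prop) : Prop :=
  [/\ (forall s, Rb s s), (forall s t, Rb s t -> Rb t s),
      (forall s t u, Rb s t -> Rb t u -> Rb s u) &
      forall s t, Rb s t -> ell s = ell t /\
        forall c, \sum_(x \in [set x | Rb c x]) tau s x =
                  \sum_(x \in [set x | Rb c x]) tau t x].
Definition bisimilar (s t : S) : Prop := exists Rb, prob_bisim Rb /\ Rb s t.

Definition S2_0 : set (S * S) := [set p | bisimilar p.1 p.2].
Definition S2_1 : set (S * S) := [set p | ell p.1 != ell p.2].
Definition S2_q : set (S * S) := ~` (S2_0 `|` S2_1).

Definition is_policy (T : S * S -> S * S -> R) : Prop :=
  forall p, S2_q p -> coupling (tau p.1) (tau p.2) (T p).

(* Probability that the chain C^T, started in p, reaches Z within n steps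
   (pairs outside S2_q are absorbing). *)
Fixpoint reach_n (T : S * S -> S * S -> R) (Z : set (S * S)) (n : nat)
    (p : S * S) : R :=
  if `[< Z p >] then 1 else
  match n with
  | 0 => 0
  | n'.+1 => if `[< S2_q p >]
             then \sum_(q \in [set: S * S]) T p q * reach_n T Z n' q
             else 0
  end.

Definition reach (T : S * S -> S * S -> R) (Z : set (S * S)) (p : S * S) : R :=
  sup (range (fun n => reach_n T Z n p)).

End LMC.

(* Main.v *)
Require Import Defs.
From HB Require Import structures.
From mathcomp Require Import all_boot all_order all_algebra.
From mathcomp Require Import finmap.
From mathcomp Require Import lra.
From mathcomp Require Import boolp classical_sets functions cardinality fsbigop reals.
From mathcomp Require Import topology normedtype derive.
Import Order.TTheory GRing.Theory Num.Theory.
Import numFieldNormedType.Exports.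
Local Open Scope classical_set_scope.
Local Open Scope ring_scope.
Set Implicit Arguments. Unset Strict Implicit. Unset Printing Implicit Defensive.

Section Gen.
Variable R : realType.

Lemma sumT_seq (T : choiceType) (f : T -> R) (r : seq T) : uniq r ->
  (forall x, x \notin r -> f x = 0) -> \sum_(x \in [set: T]) f x = \sum_(x <- r) f x.
Proof.
move=> ur fr; rewrite -(fsbig_widen [set` r] setT f) //; first by rewrite -fsbig_seq.
by move=> x [_ /= xr]; apply: fr; apply/negP.
Qed.

Definition supp (T : choiceType) (f : T -> R) :=
  fset_set [set x | f x != 0].

Lemma supp_out (T : choiceType) (f : T -> R) (x : T) :
  finite_set [set x | f x != 0] -> x \notin supp f -> f x = 0.
Proof.
move=> fin; rewrite /supp in_fset_set // => /negP H.
apply/eqP; apply: contra_notT H => H; rewrite inE; exact: H.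
Qed.

Lemma le_fsum_seq (T : choiceType) (f g : T -> R) (r : seq T) : uniq r ->
  (forall x, x \notin r -> f x = 0) -> (forall x, x \notin r -> g x = 0) ->
  (forall x, x \in r -> f x <= g x) ->
  \sum_(x \in [set: T]) f x <= \sum_(x \in [set: T]) g x.
Proof.
move=> ur fr gr fg; rewrite (sumT_seq ur fr) (sumT_seq ur gr).
by rewrite big_seq_cond [leRHS]big_seq_cond; apply: ler_sum => x /andP[xr _]; exact: fg.
Qed.

Lemma elem_le_fsum (T : choiceType) (f : T -> R) (r : seq T) x : uniq r ->
  (forall x, x \notin r -> f x = 0) -> (forall x, 0 <= f x) ->
  f x <= \sum_(x \in [set: T]) f x.
Proof.
move=> ur fr f0; rewrite (sumT_seq ur fr).
have [xr|xr] := boolP (x \in r).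
  by rewrite (bigD1_seq x) //= lerDl sumr_ge0.
by rewrite fr // sumr_ge0.
Qed.

End Gen.
Section Topo.
Variables (R : realType) (I : finType).
Notation FT := {ptws I -> R}.
Lemma cont_sum (X : Type) (r : seq X) (g : X -> FT -> R) :
  (forall x, continuous (g x)) -> continuous (fun f => \sum_(x <- r) g x f).
Proof.
move=> gc; elim: r => [|x r IH].
  have -> : (fun f : FT => \sum_(x <- [::]) g x f) = (fun=> 0).
    by apply: funext => f; rewrite big_nil.
  exact: cst_continuous.
have -> : (fun f : FT => \sum_(y <- x :: r) g y f) =
          (fun f : FT => g x f + \sum_(y <- r) g y f).
  by apply: funext => f; rewrite big_cons.
move=> f; apply: continuousD; [exact: gc|exact: IH].
Qed.
Lemma cont_lin (c : I -> R) : continuous (fun f : FT => \sum_(i : I) f i * c i).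
Proof.
apply: cont_sum => i f; apply: continuousM; last exact: cst_continuous.
exact: (@proj_continuous I (fun=> R) i).
Qed.

Lemma closed_alleq (J : Type) (phi : J -> FT -> R) (c : J -> R) :
  (forall j, continuous (phi j)) -> closed [set f | forall j, phi j f = c j].
Proof.
move=> pc.
have -> : [set f | forall j, phi j f = c j] = \bigcap_(j in [set: J]) (phi j @^-1` [set c j]).
  apply/seteqP; split => f /= h j; first by move=> _; exact: h.
  exact: h.
apply: closed_bigI => j _; apply: preimage_closed; last exact: closed_eq.
by move=> f _; exact: pc.
Qed.

Lemma fin_opt (M : set FT) (G : FT -> R) : closed M ->
  ([set f : FT | forall i, `[0, 1]%classic (f i)] `&` M) !=set0 -> continuous G ->
  exists2 f, ([set f : FT | forall i, `[0, 1]%classic (f i)] `&` M) f &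
    forall g, ([set f : FT | forall i, `[0, 1]%classic (f i)] `&` M) g -> G f <= G g.
Proof.
move=> Mc ne Gc.
have cK : compact ([set f : FT | forall i, `[0, 1]%classic (f i)] `&` M).
  apply: compact_closedI Mc.
  have := @tychonoff I (fun=> numFieldTopology.Real_sort__canonical__topology_structure_Topological R) (fun=> `[0, 1]%classic) (fun=> @segment_compact R 0 1).
  exact.
have [f fK fmin] := compact_EVT_min ne cK (continuous_subspaceT Gc).
exists f; first by rewrite inE in fK.
by move=> g Kg; apply: fmin; rewrite inE.
Qed.
End Topo.
Section Main.
Variables (R : realType) (S : countType) (L : finType) (tau : S -> S -> R) (ell : S -> L).
Hypothesis Htau : forall s, is_distr (tau s).

Definition objP (w : S * S -> R) (f : S * S -> R) :=
  \sum_(p \in [set: S * S]) w p * f p.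

Lemma distr_out (T : choiceType) (mu : T -> R) : is_distr mu ->
  forall x, x \notin supp mu -> mu x = 0.
Proof. by case=> _ [fin _] x; apply: supp_out. Qed.

Lemma objP_mono w f g : is_distr w -> (forall p, f p <= g p) ->
  objP w f <= objP w g.
Proof.
move=> wd fg; have w0 := wd.1.
apply: (@le_fsum_seq _ _ _ _ (supp w)) => //.
- by move=> x /(distr_out wd) ->; rewrite mul0r.
- by move=> x /(distr_out wd) ->; rewrite mul0r.
- by move=> x _; rewrite ler_wpM2l.
Qed.

Lemma objP_ge0 w f : is_distr w -> (forall p, 0 <= f p) -> 0 <= objP w f.
Proof. by move=> wd f0; apply: fsumr_ge0 => p _; rewrite mulr_ge0 // wd.1. Qed.

Lemma objP_cst w c : is_distr w -> objP w (fun=> c) = c.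
Proof.
move=> wd; rewrite /objP; under eq_fsbigr do rewrite mulrC.
by rewrite -mulr_fsumr wd.2.2 mulr1.
Qed.

Lemma objP_le1 w f : is_distr w -> (forall p, f p <= 1) -> objP w f <= 1.
Proof.
by move=> wd f1; apply: le_trans (objP_mono (g := fun=> 1) wd f1) _; rewrite objP_cst.
Qed.

Lemma Delta_mono e e' : (forall a b, 0 <= e a b) -> (forall a b, e a b <= e' a b) ->
  forall a b, Delta tau ell e a b <= Delta tau ell e' a b.
Proof.
move=> e0 ee' a b; rewrite /Delta; case: ifP => // _.
case: (pselect (exists w, coupling (tau a) (tau b) w)) => [[w0 Cw0]|nC].
  apply: lb_le_inf; first by exists (objP w0 (fun p => e' p.1 p.2)), w0.
  move=> _ [w Cw <-]; apply: le_trans (objP_mono (f := fun p => e p.1 p.2) (g := fun p => e' p.1 p.2) _ (fun p => ee' p.1 p.2)); last exact: Cw.1.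
  apply: ge_inf; last by exists w.
  exists 0 => _ [w' Cw' <-]; exact: (objP_ge0 (f := fun p => e p.1 p.2)) Cw'.1 (fun p => e0 p.1 p.2).
have E (f : S -> S -> R) : [set \sum_(p \in [set: S * S]) w p * f p.1 p.2
           | w in [set w | coupling (tau a) (tau b) w]] = set0.
  by apply/seteqP; split => // z [w Cw _]; apply: nC; exists w.
by rewrite !E.
Qed.

Lemma Delta_01 e : bounded01 e -> bounded01 (Delta tau ell e).
Proof.
move=> e01 a b; rewrite /Delta; case: ifP => [_|_]; first by rewrite ler01 lexx.
case: (pselect (exists w, coupling (tau a) (tau b) w)) => [[w0 Cw0]|nC].
  apply/andP; split.
    apply: lb_le_inf; first by exists (objP w0 (fun p => e p.1 p.2)), w0.
    by move=> _ [w Cw <-]; apply: (objP_ge0 (f := fun p => e p.1 p.2)) Cw.1 _ => -[x y]; case/andP: (e01 x y).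
  apply: le_trans (_ : objP w0 (fun p => e p.1 p.2) <= 1).
    apply: ge_inf; last by exists w0.
    exists 0 => _ [w' Cw' <-]; apply: (objP_ge0 (f := fun p => e p.1 p.2)) Cw'.1 _ => -[x y].
    by case/andP: (e01 x y).
  by apply: (objP_le1 (f := fun p => e p.1 p.2)) Cw0.1 _ => -[x y]; case/andP: (e01 x y).
have -> : [set \sum_(p \in [set: S * S]) w p * e p.1 p.2
           | w in [set w | coupling (tau a) (tau b) w]] = set0.
  by apply/seteqP; split => // z [w Cw _]; apply: nC; exists w.
by rewrite inf0 lexx ler01.
Qed.

Lemma tarski d : is_bisim_distance tau ell d ->
  forall e, bounded01 e -> (forall a b, Delta tau ell e a b <= e a b) ->
  forall a b, d a b <= e a b.
Proof.
case=> _ _ dmin e e01 epre.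
pose P := [set x | bounded01 x /\ (forall a b, Delta tau ell x a b <= x a b) /\
                   (forall a b, x a b <= e a b)].
have Pe : P e by split => //; split => // a b.
pose m a b := inf [set x a b | x in P].
have hl a b : has_lbound [set x a b | x in P].
  by exists 0 => _ [x [x01 _] <-]; case/andP: (x01 a b).
have mle x : P x -> forall a b, m a b <= x a b.
  by move=> Px a b; apply: (ge_inf (hl a b)); exists x.
have m0 a b : 0 <= m a b.
  apply: lb_le_inf; first by exists (e a b), e.
  by move=> _ [x [x01 _] <-]; case/andP: (x01 a b).
have m01 : bounded01 m.
  move=> a b; rewrite m0 /=; apply: le_trans (mle _ Pe a b) _.
  by case/andP: (e01 a b).
have Dm : forall a b, Delta tau ell m a b <= m a b.
  move=> a b; apply: lb_le_inf; first by exists (e a b), e.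
  move=> _ [x [x01 [xpre xe]] <-].
  apply: le_trans (Delta_mono m0 (mle x _) a b) (xpre a b).
  by split => //; split.
have PDm : P (Delta tau ell m).
  split; first exact: Delta_01.
  split.
    apply: Delta_mono => // a b.
    by case/andP: (Delta_01 m01 a b).
  by move=> a b; apply: le_trans (Dm a b) (mle _ Pe a b).
have fixm : forall a b, Delta tau ell m a b = m a b.
  by move=> a b; apply/eqP; rewrite eq_le Dm mle.
by move=> a b; apply: le_trans (dmin m m01 fixm a b) (mle _ Pe a b).
Qed.
Lemma objP_mono_in w f g : is_distr w -> (forall p, p \in supp w -> f p <= g p) ->
  objP w f <= objP w g.
Proof.
move=> wd fg; have w0 := wd.1.
apply: (@le_fsum_seq _ _ _ _ (supp w)) => //.
- by move=> x /(distr_out wd) ->; rewrite mul0r.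
- by move=> x /(distr_out wd) ->; rewrite mul0r.
- by move=> x xs; rewrite ler_wpM2l // fg.
Qed.

Lemma objP_seq w f : is_distr w -> objP w f = \sum_(q <- supp w) w q * f q.
Proof.
move=> wd; rewrite /objP (sumT_seq (r := supp w)) //.
by move=> x /(distr_out wd) ->; rewrite mul0r.
Qed.

Lemma objP_addc w f c : is_distr w -> objP w (fun q => f q + c) = objP w f + c.
Proof.
move=> wd; rewrite !objP_seq // -{2}(objP_cst c wd) objP_seq //.
by rewrite -big_split /=; apply: eq_bigr => q _; rewrite mulrDr.
Qed.

Section Reach.
Variables (T : S * S -> S * S -> R) (Z : set (S * S)).
Hypothesis HT : is_policy tau ell T.

Notation rn := (reach_n tau ell T Z).
Notation rc := (reach tau ell T Z).

Lemma reach_n0 p : rn 0 p = if `[< Z p >] then 1 else 0.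
Proof. by []. Qed.

Lemma reach_nS n p : rn n.+1 p =
  if `[< Z p >] then 1 else if `[< S2_q tau ell p >] then objP (T p) (rn n) else 0.
Proof. by []. Qed.

Lemma reach_n01 n p : 0 <= rn n p <= 1.
Proof.
elim: n p => [|n IH] p.
  by rewrite reach_n0; case: ifP => _; rewrite ?lexx ?ler01.
rewrite reach_nS; case: ifP => _; first by rewrite lexx ler01.
case: ifP => [/asboolP qp|_]; last by rewrite lexx ler01.
have wd := (HT qp).1.
by rewrite objP_ge0 ?objP_le1 // => q; case/andP: (IH q).
Qed.

Lemma reach_n_mono n p : rn n p <= rn n.+1 p.
Proof.
elim: n p => [|n IH] p.
  rewrite reach_nS reach_n0; case: ifP => // _; case: ifP => [/asboolP qp|_] //.
  by apply: (objP_ge0 (HT qp).1) => q; case/andP: (reach_n01 0 q).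
rewrite reach_nS [leRHS]reach_nS; case: ifP => // _.
case: ifP => [/asboolP qp|_] //.
by apply: objP_mono_in (HT qp).1 _ => q _.
Qed.

Lemma reach_n_homo p : {homo (fun n => rn n p) : i j / (i <= j)%N >-> i <= j}.
Proof.
by apply: homo_leq => [x|y x z|i]; [exact: lexx|exact: le_trans|exact: reach_n_mono].
Qed.

Lemma reach_hs p : has_sup (range (fun n => rn n p)).
Proof.
split; first by exists (rn 0 p), 0%N.
by exists 1 => _ [n _ <-]; case/andP: (reach_n01 n p).
Qed.

Lemma reach_ge n p : rn n p <= rc p.
Proof. by apply: (sup_upper_bound (reach_hs p)); exists n. Qed.

Lemma reach_le1 p : rc p <= 1.
Proof.
apply: ge_sup; first by exists (rn 0 p), 0%N.
by move=> _ [n _ <-]; case/andP: (reach_n01 n p).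
Qed.

Lemma reach_ge0 p : 0 <= rc p.
Proof. by apply: le_trans (reach_ge 0 p); case/andP: (reach_n01 0 p). Qed.

Lemma reach_Z p : Z p -> rc p = 1.
Proof.
move=> Zp; apply/eqP; rewrite eq_le reach_le1 /=.
by apply: le_trans (reach_ge 0 p); rewrite reach_n0 (asboolT Zp).
Qed.

Lemma objP_reach_le p : S2_q tau ell p -> ~ Z p -> objP (T p) rc <= rc p.
Proof.
move=> qp nZ; have wd := (HT qp).1.
apply/ler_addgt0Pr => eps eps0.
have [N HN] : exists N, forall q, q \in (supp (T p) : seq _) -> rc q - eps <= rn N q.
  elim: (supp (T p) : seq _) => [|q r [N HN]]; first by exists 0%N.
  have [_ [n _ <-] hx] := sup_adherent eps0 (reach_hs q).
  exists (maxn N n) => q'; rewrite inE => /orP[/eqP->|/HN h].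
    by apply: le_trans (ltW hx) (reach_n_homo _ _); rewrite leq_maxr.
  by apply: le_trans h (reach_n_homo _ _); rewrite leq_maxl.
apply: le_trans (_ : objP (T p) (fun q => rn N q + eps) <= _).
  by apply: objP_mono_in wd _ => q /HN; rewrite lerBlDr.
rewrite objP_addc // lerD2r.
have -> : objP (T p) (rn N) = rn N.+1 p by rewrite reach_nS (asboolF nZ) (asboolT qp).
exact: reach_ge.
Qed.

End Reach.
Lemma elem_le_fsum_set (T : choiceType) (f : T -> R) (X : set T) x :
  finite_set [set y | f y != 0] -> (forall y, 0 <= f y) -> X x ->
  f x <= \sum_(y \in X) f y.
Proof.
move=> fin f0 Xx; rewrite fsbig_mkcond.
apply: (@le_trans _ _ (patch (fun=> 0) X f x)); first by rewrite patchT // mem_set.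
apply: (elem_le_fsum (r := supp f)) => //.
  by move=> y ys; rewrite /patch; case: ifP => // _; exact: supp_out.
by move=> y; rewrite /patch; case: ifP.
Qed.

Lemma sum_pair (f : S * S -> R) (X Y : set S) : finite_set X -> finite_set Y ->
  (forall p, f p != 0 -> X p.1 /\ Y p.2) ->
  \sum_(p \in [set: S * S]) f p = \sum_(u \in [set: S]) \sum_(v \in [set: S]) f (u, v).
Proof.
move=> Xf Yf fXY.
rewrite -(fsbig_widen (X `*` Y) setT) //; last first.
  move=> p [_ /= nXY]; apply/eqP; apply: contra_notT nXY => /negP/negP/fXY.
  by [].
transitivity (\sum_(u \in X) \sum_(v \in Y) f (u, v));
  first by rewrite pair_fsbig //; apply: eq_fsbigr => -[].
rewrite -(fsbig_widen X setT) //; last first.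
  move=> u [_ /= nX]; apply: fsbig1 => v _.
  by apply/eqP; apply: contra_notT nX => /negP/negP/fXY [].
apply: eq_fsbigr => u _; rewrite -(fsbig_widen Y setT) // => v [_ /= nY].
by apply/eqP; apply: contra_notT nY => /negP/negP/fXY [].
Qed.

Lemma bisim_coupling a b : bisimilar tau ell a b ->
  exists w, coupling (tau a) (tau b) w /\
    (forall p, w p != 0 -> bisimilar tau ell p.1 p.2).
Proof.
case=> Rb [[Rr Rs Rt Rp] Rab].
have [lab Hcl] := Rp _ _ Rab.
have [mu0 [mufin mu1]] := Htau a; have [nu0 [nufin nu1]] := Htau b.
pose cls u := \sum_(y \in [set y | Rb u y]) tau a y.
have clsnu u : \sum_(y \in [set y | Rb u y]) tau b y = cls u by rewrite /cls Hcl.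
have cls0 u : 0 <= cls u by apply: fsumr_ge0.
have mucls u : tau a u <= cls u by apply: elem_le_fsum_set => //; exact: Rr.
have nucls u : tau b u <= cls u by rewrite -clsnu; apply: elem_le_fsum_set => //; exact: Rr.
have clsE u v : Rb u v -> cls u = cls v.
  move=> uv; rewrite /cls; have -> // : [set y | Rb u y] = [set y | Rb v y].
  apply/seteqP; split => y /=; first by move=> uy; apply: Rt (Rs _ _ uv) uy.
  by move=> vy; exact: Rt uv vy.
pose w p := if `[< Rb p.1 p.2 >] && (cls p.1 != 0)
            then tau a p.1 * tau b p.2 / cls p.1 else 0.
have w0 p : 0 <= w p.
  by rewrite /w; case: ifP => // _; rewrite divr_ge0 ?mulr_ge0.
have wsupp p : w p != 0 -> [/\ Rb p.1 p.2, tau a p.1 != 0 & tau b p.2 != 0].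
  rewrite /w; case: ifP => [/andP[/asboolP h _]|]; last by rewrite eqxx.
  by rewrite !mulf_eq0 => /norP[/norP[h1 h2] _].
have wfin : finite_set [set p | w p != 0].
  apply: (sub_finite_set (B := [set x | tau a x != 0] `*` [set x | tau b x != 0])).
    by move=> p /wsupp[].
  exact: finite_setX.
have row u : \sum_(v \in [set: S]) w (u, v) = tau a u.
  have [c0|cn0] := eqVneq (cls u) 0.
    have -> : tau a u = 0 by apply/eqP; rewrite eq_le mu0 andbT -c0.
    by apply: fsbig1 => v _; rewrite /w /= c0 eqxx andbF.
  transitivity (tau a u / cls u * \sum_(v \in [set v | Rb u v]) tau b v);
    last by rewrite clsnu divfK.
  rewrite mulr_fsumr [RHS]fsbig_mkcond; apply: eq_fsbigr => v _.
  rewrite /patch /w /= cn0 andbT.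
  case: (boolP `[< Rb u v >]) => [/asboolP h|/asboolP h].
    by rewrite mem_set // mulrAC.
  by rewrite memNset.
have col v : \sum_(u \in [set: S]) w (u, v) = tau b v.
  have [c0|cn0] := eqVneq (cls v) 0.
    have -> : tau b v = 0 by apply/eqP; rewrite eq_le nu0 andbT -c0.
    apply: fsbig1 => u _; rewrite /w /=.
    case: (boolP `[< Rb u v >]) => [/asboolP h|] //=.
    by rewrite (clsE _ _ h) c0 eqxx.
  transitivity (tau b v / cls v * \sum_(u \in [set u | Rb v u]) tau a u);
    last by rewrite divfK.
  rewrite mulr_fsumr [RHS]fsbig_mkcond; apply: eq_fsbigr => u _.
  rewrite /patch /w /=.
  case: (boolP `[< Rb u v >]) => [/asboolP h|/asboolP h].
    rewrite (clsE _ _ h) cn0 mem_set; first by rewrite [RHS]mulrC mulrA.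
    exact: Rs.
  rewrite memNset //; move=> /Rs; exact: h.
have tot : \sum_(p \in [set: S * S]) w p = 1.
  rewrite (@sum_pair _ [set x | tau a x != 0] [set x | tau b x != 0]) //.
    by under eq_fsbigr do rewrite row.
  by move=> p /wsupp[].
exists w; split; last by move=> p /wsupp [h _ _]; exists Rb.
by split; [split => //; split|split].
Qed.
Lemma bisim_label a b : bisimilar tau ell a b -> ell a = ell b.
Proof. by case=> Rb [[_ _ _ Rp] Rab]; case: (Rp _ _ Rab). Qed.

Lemma reach_bisim T p : is_policy tau ell T -> bisimilar tau ell p.1 p.2 ->
  reach tau ell T (S2_1 ell) p = 0.
Proof.
move=> HT bp.
have nZ : ~ S2_1 ell p by rewrite /S2_1 /= (bisim_label bp) eqxx.
have nq : ~ S2_q tau ell p by rewrite /S2_q /=; apply; left.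
have r0 n : reach_n tau ell T (S2_1 ell) n p = 0.
  by case: n => [|n] /=; rewrite (asboolF nZ) // (asboolF nq).
apply/eqP; rewrite eq_le; apply/andP; split.
  by apply: ge_sup; [exists 0, 0%N | move=> _ [n _ <-]; rewrite r0].
by rewrite -(r0 0%N); exact: reach_ge.
Qed.

Lemma Delta_le_reach T : is_policy tau ell T ->
  forall a b, Delta tau ell (fun a b => reach tau ell T (S2_1 ell) (a, b)) a b <=
              reach tau ell T (S2_1 ell) (a, b).
Proof.
move=> HT a b; set r := reach tau ell T (S2_1 ell).
rewrite /Delta; case: ifPn => [lab|]; first by rewrite /r reach_Z.
rewrite negbK => /eqP lab.
have hl : has_lbound [set \sum_(p \in [set: S * S]) w p * r (p.1, p.2)
           | w in [set w | coupling (tau a) (tau b) w]].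
  exists 0 => _ [w Cw <-]; apply: fsumr_ge0 => p _.
  by rewrite mulr_ge0 ?Cw.1.1 ?reach_ge0.
case: (pselect (bisimilar tau ell a b)) => [bab|nbab].
  have [w [Cw wb]] := bisim_coupling bab.
  apply: le_trans (_ : \sum_(p \in [set: S * S]) w p * r (p.1, p.2) <= _).
    by apply: (ge_inf hl); exists w.
  rewrite fsbig1; first exact: reach_ge0.
  move=> p _; have [->|/wb bp] := eqVneq (w p) 0; first by rewrite mul0r.
  by rewrite -surjective_pairing /r reach_bisim // mulr0.
have qab : S2_q tau ell (a, b).
  by rewrite /S2_q /= => -[//|]; rewrite /S2_1 /= lab eqxx.
apply: le_trans (objP_reach_le HT qab _); last by rewrite /S2_1 /= lab eqxx.
apply: (ge_inf hl); exists (T (a, b)); first exact: HT.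
by apply: eq_fsbigr => -[].
Qed.

Lemma reach_d T d : is_policy tau ell T -> is_bisim_distance tau ell d ->
  forall a b, d a b <= reach tau ell T (S2_1 ell) (a, b).
Proof.
move=> HT Hd; apply: (tarski Hd); last exact: Delta_le_reach.
by move=> a b; rewrite (reach_ge0 _ HT) (reach_le1 _ HT).
Qed.
Lemma objP_add w f g : is_distr w ->
  objP w (fun q => f q + g q) = objP w f + objP w g.
Proof.
move=> wd; rewrite !objP_seq // -big_split /=.
by apply: eq_bigr => q _; rewrite mulrDr.
Qed.

Lemma reach_disj_n T : is_policy tau ell T -> forall n p,
  reach_n tau ell T (S2_1 ell) n p + reach_n tau ell T (S2_0 tau ell) n p <= 1.
Proof.
move=> HT; elim=> [|n IH] p.
  rewrite !reach_n0.
  case: (asboolP (S2_1 ell p)) => h1; case: (asboolP (S2_0 tau ell p)) => h0;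
    rewrite ?addr0 ?add0r ?lexx ?ler01 //.
  by move: h1; rewrite /S2_1 /= (bisim_label h0) eqxx.
rewrite !reach_nS.
case: (asboolP (S2_1 ell p)) => h1; case: (asboolP (S2_0 tau ell p)) => h0.
- by move: h1; rewrite /S2_1 /= (bisim_label h0) eqxx.
- have nq : ~ S2_q tau ell p by rewrite /S2_q /=; apply; right.
  by rewrite (asboolF nq) addr0.
- have nq : ~ S2_q tau ell p by rewrite /S2_q /=; apply; left.
  by rewrite (asboolF nq) add0r.
case: (asboolP (S2_q tau ell p)) => hq; last by rewrite addr0 ler01.
have wd := (HT _ hq).1.
rewrite -objP_add //; apply: objP_le1 => // q; exact: IH.
Qed.

Lemma reach_part2 T p : is_policy tau ell T ->
  0 < reach tau ell T (S2_0 tau ell) p -> reach tau ell T (S2_1 ell) p < 1.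
Proof.
move=> HT r0.
suff : reach tau ell T (S2_1 ell) p <= 1 - reach tau ell T (S2_0 tau ell) p.
  by move=> h; apply: le_lt_trans h _; lra.
rewrite {1}/reach; apply: ge_sup; first by exists (reach_n tau ell T (S2_1 ell) 0 p), 0%N.
move=> _ [n _ <-].
suff : reach tau ell T (S2_0 tau ell) p <= 1 - reach_n tau ell T (S2_1 ell) n p by lra.
rewrite {1}/reach; apply: ge_sup; first by exists (reach_n tau ell T (S2_0 tau ell) 0 p), 0%N.
move=> _ [m _ <-].
have h1 := reach_n_homo (S2_1 ell) HT p (leq_maxl n m).
have h2 := reach_n_homo (S2_0 tau ell) HT p (leq_maxr n m).
have := reach_disj_n HT (maxn n m) p.
move: h1 h2; set x1 := reach_n _ _ _ _ _ _; set x2 := reach_n _ _ _ _ _ _;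
  set x3 := reach_n _ _ _ _ _ _; set x4 := reach_n _ _ _ _ _ _.
lra.
Qed.
Lemma supp_in (T : choiceType) (f : T -> R) x :
  finite_set [set x | f x != 0] -> f x != 0 -> x \in supp f.
Proof. by move=> fin fx; rewrite /supp in_fset_set //; exact: mem_set. Qed.

Lemma supp_mem (T : choiceType) (f : T -> R) x :
  finite_set [set x | f x != 0] -> x \in supp f -> f x != 0.
Proof.
move=> fin xs; apply/negP => /eqP fx.
by move: xs; rewrite /supp in_fset_set // inE /= fx eqxx.
Qed.

Lemma conv1 (T : choiceType) (h : T -> R) (s : seq T) (x0 : T) : uniq s ->
  (forall y, h y != 0 -> y \in s) ->
  \sum_(y \in [set: T]) h y = \sum_(j < size s) h (nth x0 s j).
Proof.
move=> us hs; rewrite (sumT_seq us); first by rewrite (big_nth x0) big_mkord.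
by move=> y ys; apply/eqP; exact: (contraNT (@hs y) ys).
Qed.

Lemma coupling_supp (mu nu : S -> R) w : coupling mu nu w ->
  forall p, w p != 0 -> mu p.1 != 0 /\ nu p.2 != 0.
Proof.
case=> [[w0 [wfin _]] [row col]] [u v] /= wn.
have wp : 0 < w (u, v) by rewrite lt0r wn w0.
split.
  have h : w (u, v) <= mu u.
    rewrite -row; apply: (elem_le_fsum_set (f := fun y => w (u, y))) => //.
    apply: (sub_finite_set (B := snd @` [set p | w p != 0])); last exact: finite_image.
    by move=> y /= wy; exists (u, y).
  exact: lt0r_neq0 (lt_le_trans wp h).
have h : w (u, v) <= nu v.
  rewrite -col; apply: (elem_le_fsum_set (f := fun y => w (y, v))) => //.
  apply: (sub_finite_set (B := fst @` [set p | w p != 0])); last exact: finite_image.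
  by move=> y /= wy; exists (y, v).
exact: lt0r_neq0 (lt_le_trans wp h).
Qed.
Lemma opt_coupling (e : S -> S -> R) a b : bounded01 e ->
  exists2 w, coupling (tau a) (tau b) w &
    forall w', coupling (tau a) (tau b) w' ->
      objP w (fun p => e p.1 p.2) <= objP w' (fun p => e p.1 p.2).
Proof.
move=> e01.
have [mu0 [mufin mu1]] := Htau a; have [nu0 [nufin nu1]] := Htau b.
pose sa : seq S := supp (tau a); pose sb : seq S := supp (tau b).
have usa : uniq sa by exact: fset_uniq.
have usb : uniq sb by exact: fset_uniq.
have insa u : tau a u != 0 -> u \in sa by exact: supp_in.
have insb u : tau b u != 0 -> u \in sb by exact: supp_in.
have memsa u : u \in sa -> tau a u != 0 by exact: supp_mem.
have memsb u : u \in sb -> tau b u != 0 by exact: supp_mem.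
pose m := size sa; pose k := size sb.
pose ea (i : 'I_m) := nth a sa i; pose eb (j : 'I_k) := nth a sb j.
have easa (i : 'I_m) : ea i \in sa by exact: mem_nth.
have ebsb (j : 'I_k) : eb j \in sb by exact: mem_nth.
have eainj (i i' : 'I_m) : (ea i == ea i') = (i == i').
  by rewrite /ea nth_uniq.
have ebinj (j j' : 'I_k) : (eb j == eb j') = (j == j').
  by rewrite /eb nth_uniq.
have tau1 c x : tau c x <= 1.
  by have [c0 [cfin c1]] := Htau c; rewrite -c1; apply: (elem_le_fsum (r := supp (tau c))) => // y; apply: distr_out.
have conv (g : S * S -> R) : (forall p, g p != 0 -> tau a p.1 != 0 /\ tau b p.2 != 0) ->
    \sum_(p \in [set: S * S]) g p = \sum_(i < m) \sum_(j < k) g (ea i, eb j).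
  move=> gs; rewrite (@sum_pair g [set u | tau a u != 0] [set u | tau b u != 0]) //.
  rewrite (conv1 (s := sa) a) //; last first.
    move=> u /(@fsbigN1 _ _ _ S S setT (fun u v => g (u, v)) u) [v _ /gs [h _]].
    exact: insa.
  apply: eq_bigr => i _; rewrite (conv1 (s := sb) a) // => v /gs [_ h].
  exact: insb.
have conva (h : S -> R) : (forall u, h u != 0 -> tau a u != 0) ->
    \sum_(u \in [set: S]) h u = \sum_(i < m) h (ea i).
  by move=> hs; rewrite (conv1 (s := sa) a) // => u /hs; exact: insa.
have convb (h : S -> R) : (forall u, h u != 0 -> tau b u != 0) ->
    \sum_(u \in [set: S]) h u = \sum_(j < k) h (eb j).
  by move=> hs; rewrite (conv1 (s := sb) a) // => u /hs; exact: insb.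
pose I := ('I_m * 'I_k)%type.
pose G (f : {ptws I -> R}) := \sum_(ij : I) f ij * e (ea ij.1) (eb ij.2).
pose M := [set f : {ptws I -> R} | forall i : 'I_m, \sum_(j < k) f (i, j) = tau a (ea i)]
    `&` [set f : {ptws I -> R} | forall j : 'I_k, \sum_(i < m) f (i, j) = tau b (eb j)].
pose Box := [set f : {ptws I -> R} | forall i, `[0, 1]%classic (f i)].
have Mc : closed M.
  apply: closedI; apply: closed_alleq => i; apply: cont_sum => j.
    exact: (@proj_continuous I (fun=> R) (i, j)).
  exact: (@proj_continuous I (fun=> R) (j, i)).
have Gc : continuous G by exact: cont_lin.
have sumbI : \sum_(j < k) tau b (eb j) = 1.
  by rewrite -nu1 (convb (tau b)).
have sumaI : \sum_(i < m) tau a (ea i) = 1.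
  by rewrite -mu1 (conva (tau a)).
have ne : (Box `&` M) !=set0.
  exists (fun ij : I => tau a (ea ij.1) * tau b (eb ij.2)); split; last split.
  - move=> ij /=; rewrite in_itv /= mulr_ge0 //=.
    by rewrite mulr_ile1.
  - by move=> i /=; rewrite -mulr_sumr sumbI mulr1.
  - by move=> j /=; rewrite -mulr_suml sumaI mul1r.
have [fo [fB fM] fmin] := fin_opt Mc ne Gc.
pose toW (p : S * S) := \sum_(i < m) \sum_(j < k)
   (if (ea i == p.1) && (eb j == p.2) then fo (i, j) else 0).
have toW_nth (i : 'I_m) (j : 'I_k) : toW (ea i, eb j) = fo (i, j).
  rewrite /toW (bigD1 i) //= [X in _ + X]big1 ?addr0; last first.
    by move=> i' /negPf nei; apply: big1 => j' _; rewrite eainj nei.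
  rewrite (bigD1 j) //= [X in _ + X]big1 ?addr0 ?eqxx //.
  by move=> j' /negPf nej; rewrite ebinj nej.
have toW_supp p : toW p != 0 -> p.1 \in sa /\ p.2 \in sb.
  case: (boolP (p.1 \in sa)) => ha; last first.
    rewrite /toW big1 ?eqxx // => i _; rewrite big1 // => j _.
    by rewrite ifF //; apply/negbTE/andP => -[/eqP h _]; move: ha; rewrite -h easa.
  case: (boolP (p.2 \in sb)) => hb //; last first.
  rewrite /toW big1 ?eqxx // => i _; rewrite big1 // => j _.
  by rewrite ifF //; apply/negbTE/andP => -[_ /eqP h]; move: hb; rewrite -h ebsb.
have toW0 p : 0 <= toW p.
  apply: sumr_ge0 => i _; apply: sumr_ge0 => j _; case: ifP => // _.
  by have := fB (i, j); rewrite /= in_itv /= => /andP[].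
have toWs p : toW p != 0 -> tau a p.1 != 0 /\ tau b p.2 != 0.
  by move=> /toW_supp [h1 h2]; split; [exact: memsa|exact: memsb].
have wfin : finite_set [set p | toW p != 0].
  apply: (sub_finite_set (B := [set u | tau a u != 0] `*` [set v | tau b v != 0])).
    by move=> p /toWs.
  exact: finite_setX.
have tot : \sum_(p \in [set: S * S]) toW p = 1.
  rewrite (conv toW) //.
  transitivity (\sum_(i < m) \sum_(j < k) fo (i, j)).
    by apply: eq_bigr => i _; apply: eq_bigr => j _; exact: toW_nth.
  by rewrite -sumaI; apply: eq_bigr => i _; exact: fM.1 i.
have row u : \sum_(v \in [set: S]) toW (u, v) = tau a u.
  case: (boolP (u \in sa)) => ua; last first.
    have -> : tau a u = 0 by apply/eqP; apply: contraNT ua; exact: insa.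
    apply: fsbig1 => v _; apply/eqP; apply: contraNT ua => h.
    exact: (toW_supp _ h).1.
  have ilt : (index u sa < m)%N by rewrite index_mem.
  have ue : ea (Ordinal ilt) = u by rewrite /ea nth_index.
  rewrite (convb (fun v => toW (u, v))); last by move=> v /toWs [].
  rewrite -ue; under eq_bigr do rewrite toW_nth.
  exact: fM.1.
have col v : \sum_(u \in [set: S]) toW (u, v) = tau b v.
  case: (boolP (v \in sb)) => vb; last first.
    have -> : tau b v = 0 by apply/eqP; apply: contraNT vb; exact: insb.
    apply: fsbig1 => u _; apply/eqP; apply: contraNT vb => h.
    exact: (toW_supp _ h).2.
  have jlt : (index v sb < k)%N by rewrite index_mem.
  have ve : eb (Ordinal jlt) = v by rewrite /eb nth_index.
  rewrite (conva (fun u => toW (u, v))); last by move=> u /toWs [].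
  rewrite -ve; under eq_bigr do rewrite toW_nth.
  exact: fM.2.
have Cw : coupling (tau a) (tau b) toW by split; [split => //; split|split].
exists toW => // w' Cw'.
have objW : objP toW (fun p => e p.1 p.2) = G fo.
  rewrite /objP (conv (fun p => toW p * e p.1 p.2)); last first.
    by move=> p; rewrite mulf_eq0 negb_or => /andP[/toWs h _].
  rewrite pair_big /=; apply: eq_bigr => -[i j] _ /=.
  by rewrite toW_nth.
pose f' : {ptws I -> R} := fun ij => w' (ea ij.1, eb ij.2).
have [[w0' [wfin' wtot']] [row' col']] := Cw'.
have f'in : (Box `&` M) f'.
  split.
    move=> ij /=; rewrite in_itv /= w0' /= -wtot'.
    apply: (elem_le_fsum (r := supp w')) => //.
    move=> q; exact: (@distr_out _ w' Cw'.1 q).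
  split.
  - move=> i /=; rewrite -row' (convb (fun v => w' (ea i, v))) //.
    by move=> v h; exact: (coupling_supp Cw' h).2.
  - move=> j /=; rewrite -col' (conva (fun u => w' (u, eb j))) //.
    by move=> u h; exact: (coupling_supp Cw' h).1.
have objW' : objP w' (fun p => e p.1 p.2) = G f'.
  rewrite /objP (conv (fun p => w' p * e p.1 p.2)); last first.
    by move=> p; rewrite mulf_eq0 negb_or => /andP[h _]; exact: coupling_supp Cw' _ h.
  by rewrite pair_big /=; apply: eq_bigr => -[i j] _.
by rewrite objW objW'; apply: fmin.
Qed.
Lemma forward d : is_bisim_distance tau ell d -> forall a b, d a b < 1 ->
  exists T, is_policy tau ell T /\ reach tau ell T (S2_1 ell) (a, b) < 1.
Proof.
move=> Hd a b dlt; have [d01 dfix _] := Hd.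
have ex p : exists w, S2_q tau ell p -> coupling (tau p.1) (tau p.2) w /\
    objP w (fun q => d q.1 q.2) <= d p.1 p.2.
  case: (pselect (S2_q tau ell p)) => qp; last by exists (fun=> 0).
  have : ~ S2_1 ell p by move=> h; apply: qp; right.
  rewrite /S2_1 /= => /negP; rewrite negbK => /eqP lab.
  have [w Cw wopt] := opt_coupling p.1 p.2 d01.
  exists w => _; split => //.
  rewrite -[X in _ <= X]dfix /Delta lab eqxx /=.
  apply: lb_le_inf; first by exists (objP w (fun q => d q.1 q.2)), w.
  by move=> _ [w' Cw' <-]; exact: wopt.
case: (choice ex) => T HT.
have pol : is_policy tau ell T by move=> p qp; exact: (HT p qp).1.
exists T; split => //.
have d1 p : S2_1 ell p -> d p.1 p.2 = 1 by move=> h; rewrite -dfix /Delta h.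
have d0 p : 0 <= d p.1 p.2 by case/andP: (d01 p.1 p.2).
have rd n p : reach_n tau ell T (S2_1 ell) n p <= d p.1 p.2.
  elim: n p => [|n IH] p.
    by rewrite reach_n0; case: (asboolP (S2_1 ell p)) => h; [rewrite d1|exact: d0].
  rewrite reach_nS; case: (asboolP (S2_1 ell p)) => h; first by rewrite d1.
  case: (asboolP (S2_q tau ell p)) => hq; last exact: d0.
  have [Cw hw] := HT p hq; apply: le_trans hw.
  exact: objP_mono_in Cw.1 (fun q _ => IH q).
apply: le_lt_trans dlt; rewrite /reach; apply: ge_sup.
  by exists (reach_n tau ell T (S2_1 ell) 0 (a, b)), 0%N.
by move=> _ [n _ <-]; exact: (rd n (a, b)).
Qed.

Lemma main_in d : is_bisim_distance tau ell d -> forall s t,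
  (d s t < 1 <->
     exists T, is_policy tau ell T /\ reach tau ell T (S2_1 ell) (s, t) < 1) /\
  ((exists T, is_policy tau ell T /\ 0 < reach tau ell T (S2_0 tau ell) (s, t)) ->
     d s t < 1).
Proof.
move=> Hd s t; split; [split|].
- exact: forward.
- by case=> T [HT rlt]; apply: le_lt_trans (reach_d HT Hd s t) rlt.
- case=> T [HT r0]; apply: le_lt_trans (reach_d HT Hd s t) _.
  exact: reach_part2.
Qed.

End Main.

Theorem mainTheorem10 (R : realType) (S : countType) (L : finType)
    (tau : S -> S -> R) (ell : S -> L)
    (Htau : forall s, is_distr (tau s))
    (d : S -> S -> R) (Hd : is_bisim_distance tau ell d) (s t : S) :
  (d s t < 1 <->
     exists T, is_policy tau ell T /\ reach tau ell T (S2_1 ell) (s, t) < 1) /\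
  ((exists T, is_policy tau ell T /\ 0 < reach tau ell T (S2_0 tau ell) (s, t)) ->
     d s t < 1).
Proof. exact: main_in. Qed.
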